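(* Let $G$ be a graph, let $\mathcal H$ be a family of subgraphs of $G$ each inducing a connected subgraph, and suppose $G$ has a tree decomposition that is $k$-sparse with respect to $\mathcal H$. Then $(G,\mathcal H)$ admits a dual support $Q^*$ with $\mathrm{tw}(Q^* )\le k$.
   Context: A subgraph $H$ of $G$ is identified with its vertex set $V(H)$. A tree decomposition $(T,\{B_z\})$ of $G$ is $k$-sparse with respect to $\mathcal H$ if every bag $B_z$ intersects at most $k$ members of $\mathcal H$. A dual support for $(G,\mathcal H)$ is a graph $Q^*$ whose vertex set is $\mathcal H$ (one vertex per member) such that for every $v\in V(G)$ the set $\mathcal H_v=\{H\in\mathcal H: v\in V(H)\}$ induces a connected subgraph of $Q^*$. $\mathrm{tw}$ denotes treewidth. *)

(* Defs.v *)
From mathcomp Require Import all_boot.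
Set Implicit Arguments. Unset Strict Implicit. Unset Printing Implicit Defensive.

Definition simple_graph (V : finType) (g : rel V) : Prop :=
  symmetric g /\ irreflexive g.

(* The vertex set S induces a connected subgraph of g
   (convention: the empty set is connected). *)
Definition connected_in (V : finType) (g : rel V) (S : {set V}) : Prop :=
  forall x y, x \in S -> y \in S ->
    connect (fun a b => [&& g a b, a \in S & b \in S]) x y.

Definition acyclic (V : finType) (g : rel V) : Prop :=
  ~ exists s : seq V, [/\ 2 < size s, uniq s & cycle g s].

Definition is_tree (T : finType) (t : rel T) : Prop :=
  [/\ 0 < #|T|, simple_graph t, connected_in t [set: T] & acyclic t].

Definition tree_decomposition (V : finType) (g : rel V)
    (T : finType) (t : rel T) (B : T -> {set V}) : Prop :=
  [/\ is_tree t,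
      (forall v : V, exists z : T, v \in B z),
      (forall u v : V, g u v -> exists z : T, (u \in B z) && (v \in B z))
    & (forall v : V, connected_in t [set z | v \in B z])].

Definition k_sparse (V : finType) (T : finType) (B : T -> {set V})
    (I : finType) (H : I -> {set V}) (k : nat) : Prop :=
  forall z : T, #|[set i : I | [exists v in B z, v \in H i]]| <= k.

Definition tw_le (V : finType) (g : rel V) (k : nat) : Prop :=
  exists (T : finType) (t : rel T) (B : T -> {set V}),
    tree_decomposition g t B /\ forall z : T, #|B z| <= k.+1.

(* Q is a dual support for (G, H): vertices are the members of H (indices i : I)
   and for every v the set H_v = {i | v \in H i} is connected in Q. *)
Definition dual_support (V : finType) (I : finType) (H : I -> {set V})
    (Q : rel I) : Prop :=
  simple_graph Q /\ forall v : V, connected_in Q [set i | v \in H i].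

(* Main.v *)
Require Import Defs.
From mathcomp Require Import all_boot.
Set Implicit Arguments. Unset Strict Implicit. Unset Printing Implicit Defensive.

Lemma connect_homo (A C : finType) (e : rel A) (e' : rel C) (f : A -> C) :
  (forall a b, e a b -> e' (f a) (f b)) ->
  forall a b, connect e a b -> connect e' (f a) (f b).
Proof.
move=> h a b /connectP [p pa ->]; apply/connectP; exists (map f p).
  by elim: p a pa => //= x p IH a /andP[ea px]; rewrite h //= IH.
by rewrite last_map.
Qed.

Section Star.
Variables (T I : finType) (t : rel T) (z0 : T).

Definition tstar (a b : T + I) : bool :=
  match a, b with
  | inl x, inl y => t x y
  | inl x, inr _ => x == z0
  | inr _, inl y => y == z0
  | inr _, inr _ => false
  end.

Definition proj (a : T + I) : T := if a is inl z then z else z0.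
Definition isinl (a : T + I) : bool := if a is inl _ then true else false.

Lemma path_proj x p : path tstar x p -> all isinl (x :: p) ->
  path t (proj x) (map proj p).
Proof.
elim: p x => //= y p IH x /andP[exy pyp] /and3P[ix iy ip].
rewrite IH ?iy //= andbT.
by case: x ix exy => // x _; case: y iy {pyp} => // y _.
Qed.

Lemma star_tree : is_tree t -> is_tree tstar.
Proof.
case=> T0 [tsym tirr] tcon tacyc; split.
- by rewrite card_sum addn_gt0 T0.
- split.
    by case=> [x|x] [y|y] //=; rewrite tsym.
  by case=> [x|x] //=; rewrite tirr.
- have h : forall z, connect (fun a b => [&& tstar a b, a \in [set: T + I] & b \in [set: T + I]]) (inl z0) z /\
                     connect (fun a b => [&& tstar a b, a \in [set: T + I] & b \in [set: T + I]]) z (inl z0).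
    have lift : forall a b, connect (fun a b => [&& t a b, a \in [set: T] & b \in [set: T]]) a b ->
       connect (fun a b => [&& tstar a b, a \in [set: T + I] & b \in [set: T + I]]) (inl a) (inl b).
      apply: connect_homo => a b; rewrite !inE /=; by rewrite !andbT.
    case=> [z|i]; split.
    + by apply: lift; apply: tcon; rewrite inE.
    + by apply: lift; apply: tcon; rewrite inE.
    + by apply: connect1; rewrite !inE /= eqxx.
    + by apply: connect1; rewrite !inE /= eqxx.
  move=> x y _ _; exact: connect_trans (proj2 (h x)) (proj1 (h y)).
- move=> [s [s3 us cs]].
  case: (boolP (all isinl s)) => [al | /allPn [x xs nx]].
    apply: tacyc; exists (map proj s); split.
    + by rewrite size_map.
    + rewrite map_inj_in_uniq // => a b ain bin.
      move/allP: al => al; move: (al a ain) (al b bin).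
      by case: a {ain} => // a _; case: b {bin} => // b _ /= ->.
    + case: s {s3 us} cs al => // x s' /= cs al.
      rewrite -map_rcons; apply: path_proj => //.
      by rewrite /= all_rcons; case/andP: al => -> ->.
  case: (rot_to xs) => n s' e.
  have cs' : cycle tstar (x :: s') by rewrite -e rot_cycle.
  have us' : uniq (x :: s') by rewrite -e rot_uniq.
  have s3' : 2 < size (x :: s') by rewrite -e size_rot.
  case: x nx {xs e} cs' us' s3' => // i _.
  case: s' => [|y s''] //; case/lastP: s'' => [|m w] // .
  rewrite /= rcons_path last_rcons => /and3P[iy _ wi].
  case: y iy => // y /eqP ->; case: w wi => // w /eqP ->.
  by rewrite mem_rcons inE eqxx /= andbF.
Qed.

End Star.

Lemma sub_conn (V : finType) (g : rel V) (T : finType) (t : rel T) (B : T -> {set V})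
  (H : {set V}) : tree_decomposition g t B -> connected_in g H ->
  connected_in t [set z | [exists v in B z, v \in H]].
Proof.
case=> _ _ edges sub Hc z1 z2; rewrite !inE => /existsP[v1 /andP[v1z1 v1H]] /existsP[v2 /andP[v2z2 v2H]].
set S := [set z | [exists v in B z, v \in H]].
have lift : forall v, v \in H -> forall a b,
   connect (fun a b => [&& t a b, a \in [set z | v \in B z] & b \in [set z | v \in B z]]) a b ->
   connect (fun a b => [&& t a b, a \in S & b \in S]) a b.
  move=> v vH; apply: (connect_homo (f := id)) => a b /and3P[ab]; rewrite !inE => va vb.
  by rewrite ab /=; apply/andP; split; apply/existsP; exists v; rewrite ?va ?vb vH.
have P : forall p w, w \in H -> (forall z, w \in B z -> connect (fun a b => [&& t a b, a \in S & b \in S]) z1 z) ->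
    path (fun a b => [&& g a b, a \in H & b \in H]) w p ->
    forall z, last w p \in B z -> connect (fun a b => [&& t a b, a \in S & b \in S]) z1 z.
  elim=> [|x p IH] w wH Pw //= /andP[/and3P[wx _ xH] pp].
  apply: IH pp => // z xz.
  have [z' /andP[wz' xz']] := edges _ _ wx.
  apply: connect_trans (Pw _ wz') _.
  by apply: (lift _ xH); apply: sub; rewrite inE.
have /connectP[p pp e] := Hc v1 v2 v1H v2H.
apply: (P p v1) => //; last by rewrite -e.
by move=> z vz; apply: (lift _ v1H); apply: sub; rewrite inE.
Qed.

Theorem mainTheorem10 (V : finType) (g : rel V) (I : finType)
    (H : I -> {set V}) (k : nat) :
  simple_graph g ->
  (forall i : I, connected_in g (H i)) ->
  (exists (T : finType) (t : rel T) (B : T -> {set V}),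
      tree_decomposition g t B /\ k_sparse B H k) ->
  exists Q : rel I, dual_support H Q /\ tw_le Q k.
Proof.
move=> gs Hc [T [t [B [td sp]]]].
have td' := td; case: td' => tt cover edges sub.
have [z0 _] : exists z0, z0 \in T by case: tt => /card_gt0P.
pose Bs z := [set i : I | [exists v in B z, v \in H i]].
pose B' (a : T + I) : {set I} :=
  match a with inl z => Bs z | inr i => if H i == set0 then [set i] else set0 end.
pose Q (i j : I) := (i != j) && [exists z, (i \in Bs z) && (j \in Bs z)].
exists Q; split.
  split; first split.
  - move=> i j; rewrite /Q eq_sym; congr (_ && _).
    by apply/existsP/existsP => -[z hz]; exists z; rewrite andbC.
  - by move=> i; rewrite /Q eqxx.
  move=> v x y; rewrite !inE => xv yv.
  have [z vz] := cover v.
  case: (eqVneq x y) => [->|xy]; first exact: connect0.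
  apply: connect1; rewrite !inE /= xv yv andbT /Q xy /=. rewrite andbT.
  by apply/existsP; exists z; rewrite !inE; apply/andP; split; apply/existsP; exists v; rewrite vz.
exists (T + I)%type, (tstar t z0), B'; split; last first.
  case=> [z|i] /=; first by apply: leq_trans (sp z) _.
  by case: ifP => _; rewrite ?cards1 ?cards0.
split.
- exact: star_tree.
- move=> i; case: (boolP (H i == set0)) => h.
    by exists (inr i); rewrite /= h inE.
  case/set0Pn: h => v vi; have [z vz] := cover v.
  by exists (inl z); rewrite /= inE; apply/existsP; exists v; rewrite vz.
- move=> i j /andP[_ /existsP[z hz]]; by exists (inl z).
move=> i x y; rewrite !inE.
case: (boolP (H i == set0)) => h0.
  have E : forall a, (i \in B' a) = (a == inr i).
    case=> [z|j] /=.
      rewrite inE; apply/existsP => -[v /andP[_ vi]].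
      by move/eqP: h0 vi => ->; rewrite inE.
    case: (eqVneq (H j) set0) => hj.
      by rewrite inE; apply/eqP/eqP => [->|[->]].
    rewrite inE; apply/esym/eqP => -[ji]; by rewrite ji h0 in hj.
  by rewrite !E => /eqP -> /eqP ->; apply: connect0.
have E : forall a, (i \in B' a) = if a is inl z then i \in Bs z else false.
  case=> [z|j] //=.
  case: (eqVneq (H j) set0) => hj; last by rewrite inE.
  rewrite inE; apply/negbTE/eqP => ji; by rewrite ji hj eqxx in h0.
rewrite !E; case: x => // z1; case: y => // z2 h1 h2.
have := sub_conn td (Hc i); move/(_ z1 z2).
rewrite !inE; rewrite !inE in h1 h2; move/(_ h1 h2).
apply: (connect_homo (f := inl)) => a b /and3P[ab].
by rewrite !inE => ha hb /=; rewrite ab ha hb.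
Qed.
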